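(* Let $F$ be a field of characteristic zero. Fix integers $d,\tau\ge0$ and let $\{\beta_i\}_{i\ge\tau}\subseteq F$ satisfy $$\beta_s\beta_t=(\beta_s+\beta_t)\beta_{s+t+d}\quad\text{for all } s,t\ge\tau.$$ Then either $\beta_i=0$ for all $i\ge\tau$, or there exist integers $k$ and $\Delta$ with $\beta_k\ne0$, $0\le k-\tau<\Delta\le k+d$ and $\Delta\mid k+d$, such that for all $t\ge\tau$ $$\beta_t=\begin{cases}\dfrac{(k+d)\beta_k}{k+d+\Delta s}, & t=k+\Delta s,\ s\ge0,\\ 0,&\text{otherwise}.\end{cases}$$ In particular, if $d=\tau=0$, then $\beta_i=0$ for all $i\ge0$. *)

(* Defs.v *)
From mathcomp Require Import all_boot all_algebra.
Set Implicit Arguments.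
Unset Strict Implicit.
Unset Printing Implicit Defensive.

(* Main.v *)
Require Import Defs.
From mathcomp Require Import all_boot all_algebra.
From mathcomp Require Import zify ring.
From Stdlib Require Import Classical.
Import GRing.Theory.
Local Open Scope ring_scope.

Definition Hyp (F : fieldType) (d tau : nat) (beta : nat -> F) :=
  forall s t : nat, (tau <= s)%N -> (tau <= t)%N ->
     beta s * beta t = (beta s + beta t) * beta (s + t + d)%N.

Lemma nz_pos {F : fieldType} {d tau : nat} {beta : nat -> F} :
  @Hyp F d tau beta -> forall s, (tau <= s)%N -> beta s != 0 -> (0 < s + d)%N.
Proof.
move=> hb s hs bs; case: (posnP (s + d)) => // /eqP; rewrite addn_eq0.
move=> /andP[/eqP s0 /eqP d0]; subst.
have := hb 0%N 0%N hs hs; rewrite !addn0 => H.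
have : beta 0%N * beta 0%N == 0.
  apply/eqP; have : (beta 0%N + beta 0%N) * beta 0%N - beta 0%N * beta 0%N
     = beta 0%N * beta 0%N by ring.
  rewrite -H subrr => ->; by [].
by rewrite mulf_eq0 (negbTE bs).
Qed.

Lemma mult {F : fieldType} {d tau : nat} {beta : nat -> F} :
  @Hyp F d tau beta -> forall s, (tau <= s)%N -> beta s != 0 ->
  forall n, beta (n.+1 * (s + d) - d)%N * n.+1%:R = beta s.
Proof.
move=> hb s hs bs; elim=> [|n IH].
  by rewrite mul1n addnK mulr1.
set s' := (n.+1 * (s + d) - d)%N in IH.
have hs' : (tau <= s')%N by rewrite /s'; nia.
have E : (n.+2 * (s + d) - d = s' + s + d)%N by rewrite /s'; nia.
rewrite E; set X := beta (s' + s + d)%N.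
have H := hb _ _ hs' hs; rewrite -/X in H.
move: bs; rewrite -IH => bs.
apply: (mulfI bs).
set b := beta s'; set n1 : F := n.+1%:R.
have -> : (n.+2%:R : F) = 1 + n1 by rewrite /n1 -natr1 addrC.
transitivity (n1 * ((b + b * n1) * X)); first by ring.
have -> : b + b * n1 = beta s' + beta s by rewrite -IH.
by rewrite -H -IH; rewrite /b; ring.
Qed.

Lemma ratio {F : fieldType} {d tau : nat} {beta : nat -> F} :
  @Hyp F d tau beta -> forall s u, (tau <= s)%N -> (tau <= u)%N ->
  beta s != 0 -> beta u != 0 ->
  beta s * (s + d)%:R = beta u * (u + d)%:R.
Proof.
move=> hb s u hs hu bs bu.
have ps := nz_pos hb s hs bs; have pu := nz_pos hb u hu bu.
have := mult hb s hs bs (u + d).-1; have := mult hb u hu bu (s + d).-1.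
rewrite !prednK // (mulnC (s + d)) => <- <-.
by rewrite -!mulrA (mulrC (s + d)%:R).
Qed.

Theorem lemma2p3 (F : fieldType) (hF : [pchar F] =i pred0)
  (d tau : nat) (beta : nat -> F)
  (hbeta : forall s t : nat, (tau <= s)%N -> (tau <= t)%N ->
     beta s * beta t = (beta s + beta t) * beta (s + t + d)%N) :
  ((forall i : nat, (tau <= i)%N -> beta i = 0) \/
   (exists k Delta : nat,
      [/\ beta k != 0, (tau <= k)%N, (k - tau < Delta)%N, (Delta <= k + d)%N
        & (Delta %| k + d)%N] /\
      forall t : nat, (tau <= t)%N ->
        beta t = if (k <= t)%N && (Delta %| t - k)%N
                 then (k + d)%:R * beta k / (k + d + Delta * ((t - k) %/ Delta))%:R
                 else 0))
  /\ (d = 0%N -> tau = 0%N -> forall i : nat, beta i = 0).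
Proof.
have hb : @Hyp F d tau beta := hbeta.
pose inA a := (tau + d <= a)%N && (beta (a - d)%N != 0).
have addA : forall a b, inA a -> inA b -> inA (a + b)%N.
  move=> a b /andP[ha na] /andP[hb' nb]; apply/andP; split; first lia.
  have := hbeta (a - d)%N (b - d)%N ltac:(lia) ltac:(lia).
  have -> : (a - d + (b - d) + d = a + b - d)%N by lia.
  move=> H; apply/negP => /eqP H0; move: H; rewrite H0 mulr0 => /eqP.
  by rewrite mulf_eq0 (negbTE na) (negbTE nb).
have subA : forall a b, inA a -> inA (a + b)%N -> (tau + d <= b)%N -> inA b.
  move=> a b /andP[ha na] /andP[hab nab] hbb; apply/andP; split=> //.
  apply/negP => /eqP H0.
  have := hbeta (a - d)%N (b - d)%N ltac:(lia) ltac:(lia).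
  have -> : (a - d + (b - d) + d = a + b - d)%N by lia.
  rewrite H0 mulr0 addr0 => /eqP; rewrite eq_sym mulf_eq0 (negbTE na) (negbTE nab).
  by [].
have main : (forall i : nat, (tau <= i)%N -> beta i = 0) \/
   (exists k Delta : nat,
      [/\ beta k != 0, (tau <= k)%N, (k - tau < Delta)%N, (Delta <= k + d)%N
        & (Delta %| k + d)%N] /\
      forall t : nat, (tau <= t)%N ->
        beta t = if (k <= t)%N && (Delta %| t - k)%N
                 then (k + d)%:R * beta k / (k + d + Delta * ((t - k) %/ Delta))%:R
                 else 0).
  have [ex|nex] := classic (exists a, inA a); last first.
    left=> i hi; apply/eqP; apply/negPn/negP => bi; apply: nex; exists (i + d)%N.
    by apply/andP; split; [lia | rewrite addnK].
  right; case: (ex_minnP ex) => m Am minm.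
  have hm : (tau + d <= m)%N by case/andP: Am.
  have bm : beta (m - d)%N != 0 by case/andP: Am.
  have m0 : (0 < m)%N.
    have := nz_pos hb (m - d)%N ltac:(lia) bm; lia.
  have ex2 : exists x, inA x && (m < x)%N.
    by exists (m + m)%N; rewrite addA //; lia.
  case: (ex_minnP ex2) => m' /andP[Am' ltm] minm'.
  set D := (m' - m)%N.
  have D0 : (0 < D)%N by rewrite /D; lia.
  have prog : forall j, inA (m + j * D)%N.
    elim=> [|j IH]; first by rewrite mul0n addn0.
    have := addA _ _ IH Am'.
    have -> : (m + j * D + m' = m + (m + j.+1 * D))%N by rewrite /D mulSn; lia.
    move=> H; apply: (subA _ _ Am H); rewrite mulSn; lia.
  have only : forall x, inA x -> (m <= x)%N && (D %| x - m)%N.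
    elim/ltn_ind=> x IH Ax; have hmx := minm x Ax; rewrite hmx /=.
    case: (ltngtP m x) hmx => // [lt _|<- _]; last by rewrite subnn dvdn0.
    have hm'x : (m' <= x)%N by apply: minm'; rewrite Ax lt.
    case: (ltngtP m' x) hm'x => // [lt' _|<- _]; last by rewrite dvdnn.
    have := addA _ _ Ax Am.
    have -> : (x + m = m' + (x - D))%N by rewrite /D; lia.
    move=> H; have Ax' := subA _ _ Am' H ltac:(rewrite /D; lia).
    have /andP[_ h] := IH (x - D)%N ltac:(lia) Ax'.
    have -> : (x - m = (x - D - m) + D)%N by rewrite /D; lia.
    by apply: dvdn_add h (dvdnn D).
  have Dm : (D %| m)%N.
    by have /andP[_] := only _ (addA _ _ Am Am); rewrite addnK.
  have kD : (m - d - tau < D)%N.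
    case: (ltnP (m - d - tau) D) => // H.
    have := @subA m' (m - D)%N Am'.
    have -> : (m' + (m - D) = m + m)%N by rewrite /D; lia.
    move=> /(_ (addA _ _ Am Am) ltac:(lia)) Ab.
    have := minm _ Ab; lia.
  have hF0 := (pcharf0P F).1 hF.
  exists (m - d)%N, D; split.
    have -> : (m - d + d = m)%N by lia.
    split=> //; first lia.
    exact: dvdn_leq.
  move=> t ht; case: ifP => [/andP[hk hdv] | hno].
    have e : ((t - (m - d)) %/ D * D = t - (m - d))%N by rewrite divnK.
    have At : inA (t + d)%N.
      have -> : (t + d = m + (t - (m - d)) %/ D * D)%N by rewrite e; lia.
      exact: prog.
    have bt : beta t != 0 by case/andP: At => _; rewrite addnK.
    have -> : (m - d + d + D * ((t - (m - d)) %/ D) = t + d)%N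
      by rewrite mulnC e; lia.
    have R := ratio hb t (m - d)%N ht ltac:(lia) bt bm.
    rewrite (mulrC (m - d + d)%:R) -R mulfK //.
    by rewrite hF0; lia.
  apply/eqP; apply: (contraFT _ hno) => bt.
  have At : inA (t + d)%N by apply/andP; split; [lia | rewrite addnK].
  have /andP[h1 h2] := only _ At.
  apply/andP; split; first lia.
  by have -> : (t - (m - d) = t + d - m)%N by lia.
split=> // d0 t0 i; subst.
case: main => [H|[k [Delta [[_ _ h1 h2 _] _]]]]; first by apply: H.
exfalso; lia.
Qed.
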